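(* Let $p$ be an odd prime, $q=p^m$, $q=et+1$ with integers $e\geq 2,t\geq 1$, $R_{e,q}=\mathbb{F}_q[u]/\langle u^e-1\rangle$, and let $\varphi:R_{e,q}^n\to\mathbb{F}_q^{en}$ be the Gray map defined by a matrix $M\in GL_e(\mathbb{F}_q)$ with $MM^T=\gamma I_e$, $\gamma\in\mathbb{F}_q^*$ (see context). For every linear code $\mathcal{C}$ of length $n$ over $R_{e,q}$, $\varphi(\mathcal{C}\cap\mathcal{C}^\perp)=\varphi(\mathcal{C})\cap\varphi(\mathcal{C})^\perp$.
   Context: Write $u^e-1=\prod_{i=1}^e(u-\alpha_i)$ over $\mathbb{F}_q$, $G_i=u-\alpha_i$, $\widehat{G}_i=(u^e-1)/G_i$, $z_iG_i+h_i\widehat{G}_i=1$, $\mu_i=h_i\widehat{G}_i$; these are pairwise orthogonal idempotents summing to $1$, and each $r\in R_{e,q}$ is uniquely $r=\sum_i s_i\mu_i$, $s_i\in\mathbb{F}_q$. The Gray map is $\varphi(r_0,\dots,r_{n-1})=(\boldsymbol{r_0}M,\dots,\boldsymbol{r_{n-1}}M)$ with $\boldsymbol{r_j}=(s_{j,1},\dots,s_{j,e})$ for $r_j=\sum_i s_{j,i}\mu_i$. Duals are Euclidean (over $R_{e,q}$ and over $\mathbb{F}_q$). *)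

(* Defs.v *)
From HB Require Import structures.
From mathcomp Require Import all_boot all_order all_algebra.
Set Implicit Arguments. Unset Strict Implicit. Unset Printing Implicit Defensive.
Import GRing.Theory.
Local Open Scope ring_scope.

Definition Req (F : fieldType) (e : nat) := {poly %/ ('X^e - 1 : {poly F})}.

Definition Gpol (F : fieldType) (e : nat) (alpha : 'I_e -> F) (i : 'I_e) : {poly F} :=
  'X - (alpha i)%:P.
Definition Ghat (F : fieldType) (e : nat) (alpha : 'I_e -> F) (i : 'I_e) : {poly F} :=
  ('X^e - 1) %/ Gpol alpha i.

Definition mu (F : fieldType) (e : nat) (alpha : 'I_e -> F) (h : 'I_e -> {poly F})
  (i : 'I_e) : Req F e := in_qpoly ('X^e - 1) (h i * Ghat alpha i).

Definition linear_code (F : fieldType) (e n : nat) (C : 'rV[Req F e]_n -> Prop) :=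
  C 0 /\ (forall x y, C x -> C y -> C (x + y)) /\
  (forall (r : Req F e) x, C x -> C (r *: x)).

Definition eucl (R : comNzRingType) (n : nat) (x y : 'rV[R]_n) : R :=
  \sum_(j < n) x 0 j * y 0 j.
Definition dual (R : comNzRingType) (n : nat) (C : 'rV[R]_n -> Prop) : 'rV[R]_n -> Prop :=
  fun x => forall y, C y -> eucl x y = 0.
Definition setI_pred (T : Type) (A B : T -> Prop) : T -> Prop := fun x => A x /\ B x.

(* Gray map: phi(r_0,...,r_{n-1}) = (r_0 M, ..., r_{n-1} M) where r_j = sum_i s_{j,i} mu_i
   and bold r_j = (s_{j,1},...,s_{j,e}).  Row j of S is bold r_j; the image is the
   concatenation of the rows of S *m M (mxvec, row-major: block j = positions j*e..j*e+e-1).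
   Since the decomposition r = sum_i s_i mu_i is unique, this relation is the graph of phi. *)
Definition gray_rel (F : fieldType) (e n : nat) (alpha : 'I_e -> F)
  (h : 'I_e -> {poly F}) (M : 'M[F]_e) (c : 'rV[Req F e]_n) (w : 'rV[F]_(n * e)) : Prop :=
  exists S : 'M[F]_(n, e),
    (forall j : 'I_n, c 0 j = \sum_(i < e) S j i *: mu alpha h i) /\
    w = mxvec (S *m M).

Definition gray_image (F : fieldType) (e n : nat) (alpha : 'I_e -> F)
  (h : 'I_e -> {poly F}) (M : 'M[F]_e) (C : 'rV[Req F e]_n -> Prop) : 'rV[F]_(n * e) -> Prop :=
  fun w => exists c, C c /\ gray_rel alpha h M c w.

(* Main.v *)
Require Import Defs.
From HB Require Import structures.
From mathcomp Require Import all_boot all_order all_algebra.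
Set Implicit Arguments. Unset Strict Implicit. Unset Printing Implicit Defensive.
Import GRing.Theory.
From mathcomp Require Import ring.
Import Pdiv.CommonRing Pdiv.RingMonic.
Local Open Scope ring_scope.

Lemma eucl_mxvec (F : fieldType) m n (A B : 'M[F]_(m, n)) :
  eucl (mxvec A) (mxvec B) = \tr (A *m B^T).
Proof.
rewrite /eucl /mxtrace.
rewrite (reindex (uncurry (@mxvec_index m n))) /=; last first.
  exact: curry_mxvec_bij.
under [RHS]eq_bigr => i _ do rewrite mxE.
rewrite pair_bigA /=.
apply: eq_bigr => [[i j]] _ /=.
by rewrite !mxvecE mxE.
Qed.

Section Ev.
Variables (F : fieldType) (e : nat) (alpha : 'I_e -> F) (z h : 'I_e -> {poly F}).
Hypothesis he : (0 < e)%N.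
Hypothesis halpha : ('X^e - 1 : {poly F}) = \prod_(i < e) ('X - (alpha i)%:P).
Hypothesis hzh : forall i, z i * Gpol alpha i + h i * Ghat alpha i = 1.

Lemma d_eq : ('X^e - 1 : {poly F}) = 'X^e - 1%:P.
Proof. by rewrite polyC1. Qed.

Lemma d_monic : ('X^e - 1 : {poly F}) \is monic.
Proof. by rewrite d_eq monicXnsubC. Qed.

Lemma mkm : mk_monic ('X^e - 1 : {poly F}) = 'X^e - 1.
Proof. by rewrite /mk_monic d_monic d_eq size_XnsubC // ltnS he. Qed.

Lemma root_d k : ('X^e - 1 : {poly F}).[alpha k] = 0.
Proof. by rewrite halpha horner_prod (bigD1 k) //= hornerXsubC subrr mul0r. Qed.

Lemma evmod k p : (rmodp p (mk_monic ('X^e - 1 : {poly F}))).[alpha k] = p.[alpha k].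
Proof.
rewrite mkm [in RHS](rdivp_eq d_monic p) hornerD hornerM root_d mulr0 add0r //.
Qed.

Definition ev k (r : Req F e) : F := (r : {poly F}).[alpha k].

Lemma evM k (x y : Req F e) : ev k (x * y) = ev k x * ev k y.
Proof. by rewrite /ev poly_of_qpolyM evmod hornerM. Qed.

Lemma evZ k a (x : Req F e) : ev k (a *: x) = a * ev k x.
Proof. by rewrite /ev poly_of_qpolyZ hornerZ. Qed.

Lemma ev_sum k (I : finType) (f : I -> Req F e) : ev k (\sum_i f i) = \sum_i ev k (f i).
Proof. by rewrite /ev poly_of_qpoly_sum horner_sum. Qed.

Lemma Ghat_prod i : Ghat alpha i = \prod_(l | l != i) ('X - (alpha l)%:P).
Proof. by rewrite /Ghat /Gpol halpha (bigD1 i) //= mulKp // polyXsubC_eq0. Qed.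

Lemma Ghat_mul i : Ghat alpha i * ('X - (alpha i)%:P) = 'X^e - 1.
Proof. by rewrite halpha (bigD1 i) //= mulrC Ghat_prod. Qed.

Lemma ev_mu i k : ev k (mu alpha h i) = (i == k)%:R.
Proof.
rewrite /ev /mu /= evmod hornerM. case: eqP => [<-|/eqP nik].
  have := congr1 (fun p => p.[alpha i]) (hzh i).
  by rewrite /= hornerD !hornerM /Gpol hornerXsubC subrr mulr0 add0r hornerC.
rewrite Ghat_prod horner_prod (bigD1 k) //= ?hornerXsubC ?subrr ?mul0r ?mulr0 //.
by rewrite eq_sym.
Qed.

Lemma mu_mul k (r : Req F e) : mu alpha h k * r = ev k r *: mu alpha h k.
Proof.
apply: val_inj; change (((mu alpha h k * r : Req F e) : {poly F}) = ((ev k r *: mu alpha h k : Req F e) : {poly F})).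
rewrite poly_of_qpolyM poly_of_qpolyZ /mu /= rmodp_mulml.
have /factor_theorem [q hq] : root ((r : {poly F}) - (ev k r)%:P) (alpha k).
  by rewrite /root hornerD hornerN hornerC /ev subrr.
have -> : (r : {poly F}) = q * ('X - (alpha k)%:P) + (ev k r)%:P.
  by rewrite -hq subrK.
rewrite mulrDr.
have -> : h k * Ghat alpha k * (q * ('X - (alpha k)%:P)) = (h k * q) * ('X^e - 1).
  by rewrite -(Ghat_mul k); ring.
have -> : h k * Ghat alpha k * (ev k r)%:P = ev k r *: (h k * Ghat alpha k) by rewrite mulrC mul_polyC.
rewrite mkm rmodpD ?(rmodp_mull d_monic) ?add0r ?rmodpZ //.
all: try exact: d_monic; try exact: monic_mk_monic.
Qed.

End Ev.
Lemma tr_gray (F: fieldType) e n (S S' : 'M[F]_(n,e)) (M : 'M[F]_e) gamma (hMM : M *m M^T = gamma%:M) :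
  \tr (S *m M *m (S' *m M)^T) = gamma * \sum_j \sum_i S j i * S' j i.
Proof.
rewrite trmx_mul mulmxA -(mulmxA S) hMM mul_mx_scalar -scalemxAl mxtraceZ.
congr (_ * _); rewrite /mxtrace; apply: eq_bigr => j _; rewrite mxE.
by apply: eq_bigr => i _; rewrite mxE.
Qed.

Theorem lemma4p7 (F : finFieldType) (p m e t n : nat)
  (hp : prime p) (hpodd : odd p) (hq : #|F| = (p ^ m)%N)
  (het : #|F| = (e * t + 1)%N) (he : (2 <= e)%N) (ht : (1 <= t)%N)
  (alpha : 'I_e -> F)
  (halpha : ('X^e - 1 : {poly F}) = \prod_(i < e) ('X - (alpha i)%:P))
  (z h : 'I_e -> {poly F})
  (hzh : forall i, z i * Gpol alpha i + h i * Ghat alpha i = 1)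
  (M : 'M[F]_e) (hM : M \in unitmx) (gamma : F) (hgamma : gamma != 0)
  (hMM : M *m M^T = gamma%:M)
  (C : 'rV[Req F e]_n -> Prop) (hC : linear_code C) :
  forall w : 'rV[F]_(n * e),
    gray_image alpha h M (setI_pred C (dual C)) w <->
    setI_pred (gray_image alpha h M C) (dual (gray_image alpha h M C)) w.
Proof.
have he0 : (0 < e)%N by apply: leq_trans he.
have evc : forall (c : 'rV[Req F e]_n) (S : 'M[F]_(n, e)) j k,
    c 0 j = \sum_(i < e) S j i *: mu alpha h i -> ev alpha k (c 0 j) = S j k.
  move=> c S j k ->; rewrite ev_sum.
  rewrite (bigD1 k) //= big1 => [|i /negbTE nik]; rewrite evZ (ev_mu he0 halpha hzh).
    by rewrite eqxx mulr1 addr0.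
  by rewrite nik mulr0.
move=> w; split.
  move=> [c [[Cc dc] [S [hS ->]]]]; split; first by exists c; split => //; exists S.
  move=> y [c' [Cc' [S' [hS' ->]]]].
  rewrite eucl_mxvec (tr_gray _ _ hMM) exchange_big /= big1 ?mulr0 // => k _.
  have := congr1 (ev alpha k) (dc c' Cc').
  have ev0 : ev alpha k 0 = 0 by rewrite /ev horner0.
  rewrite /eucl ev_sum ev0 => H; rewrite -[RHS]H.
  apply: eq_bigr => j _.
  by rewrite (evM he0 halpha) (evc _ _ _ _ (hS j)) (evc _ _ _ _ (hS' j)).
move=> [[c [Cc [S [hS ->]]]] hdual].
exists c; split; last by exists S.
split => // c' Cc'.
have key : forall k, \sum_j S j k * ev alpha k (c' 0 j) = 0.
  move=> k.
  pose S'' : 'M[F]_(n, e) := \matrix_(j, i) ((i == k)%:R * ev alpha k (c' 0 j)).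
  have Cc'' : C (mu alpha h k *: c') by apply: hC.2.2.
  have H : gray_image alpha h M C (mxvec (S'' *m M)).
    exists (mu alpha h k *: c'); split => //; exists S''; split => // j.
    rewrite mxE (mu_mul h he0 halpha) (bigD1 k) //= big1 => [|i /negbTE nik].
      by rewrite mxE eqxx mul1r addr0.
    by rewrite mxE nik mul0r scale0r.
  have := hdual _ H.
  rewrite eucl_mxvec (tr_gray _ _ hMM) => /eqP; rewrite mulf_eq0 (negbTE hgamma) /= => /eqP H0; rewrite -[RHS]H0.
  apply: eq_bigr => j _; rewrite (bigD1 k) //= big1 => [|i /negbTE nik].
    by rewrite mxE eqxx mul1r addr0.
  by rewrite mxE nik mul0r mulr0.
rewrite /eucl.
transitivity (\sum_(j < n) \sum_(i < e) (S j i * ev alpha i (c' 0 j)) *: mu alpha h i).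
  apply: eq_bigr => j _; rewrite (hS j) mulr_suml; apply: eq_bigr => i _.
  by rewrite -scalerAl (mu_mul h he0 halpha) scalerA.
rewrite exchange_big /= big1 // => i _.
by rewrite -scaler_suml key scale0r.
Qed.
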